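(* Let $k\ge1$ and let $M_k$ be the set of LTI probability measures on $X_k=\{0,1\}^{\{0,\ldots,k\}}$. Then: (i) the map ${\cal C}\mapsto\nu_{\cal C}$ is a bijection from the set of cycles of the de Bruijn graph $G_k$ onto the set of $k$-primitive BPC measures on $\{0,1\}^{\mathbb{Z}}$; (ii) the extreme points of the convex polytope $M_k$ are exactly the measures $\pi_k\nu_{\cal C}$ with ${\cal C}$ a cycle of $G_k$; (iii) every $\mu_k\in M_k$ equals $\pi_k\nu$ for some finite convex combination $\nu$ of $k$-primitive BPC measures $\nu_{\cal C}$; in particular every $\mu_k\in M_k$ has a translation invariant extension to $\{0,1\}^{\mathbb{Z}}$ which is a PC measure.
   Context: LTI: for all subsets $A,A'\subset\{0,\ldots,k\}$ with $A'$ a translate of $A$, the marginal on $\{0,1\}^{A'}$ is the translate of the marginal on $\{0,1\}^A$. $\pi_k\nu$ is the marginal of a measure $\nu$ on $\{0,1\}^{\mathbb{Z}}$ on the coordinates $0,\ldots,k$. The binary de Bruijn graph $G_k$ of order $k$ is the directed graph whose vertices are the binary strings of length $k$ and whose edges are the binary strings of length $k+1$, the edge $a\theta b$ ($a,b\in\{0,1\}$, $\theta$ a string of length $k-1$) going from vertex $a\theta$ to vertex $\theta b$ (so there are loops at $0^k$ and $1^k$). A cycle is a closed directed path with no repeated vertex (loops count as cycles), considered up to cyclic rotation of its starting point. For a minimal closed path $P$ with edges $\eta^{(1)},\ldots,\eta^{(p)}$ in order (minimal meaning it is not a repetition of a shorter closed path), the associated periodic configuration is obtained by traversing $P$ repeatedly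 and recording the first symbol $\eta^{(j)}_0$ of each edge, and $\nu_P$ is the measure giving mass $1/p$ to each of the $p$ translates of this configuration. A PC measure is a translation invariant probability measure on $\{0,1\}^{\mathbb{Z}}$ supported on periodic configurations; a BPC measure is one giving mass $1/p$ to each of the $p$ translates of a single configuration of minimal period $p$. A periodic configuration $\eta$ of minimal period $p$ (and its BPC measure) is $k$-primitive if $\eta_i\cdots\eta_{i+k-1}=\eta_j\cdots\eta_{j+k-1}$ only when $p$ divides $j-i$. *)

(* Defs.v *)
From HB Require Import structures.
From mathcomp Require Import all_boot all_order all_algebra.
Set Implicit Arguments. Unset Strict Implicit. Unset Printing Implicit Defensive.
Import Order.TTheory GRing.Theory Num.Theory.
Local Open Scope ring_scope.

Definition config := int -> bool.

Definition is_period (eta : config) (p : nat) : Prop :=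
  forall i : int, eta (i + p%:Z) = eta i.

Definition min_period (eta : config) (p : nat) : Prop :=
  [/\ (0 < p)%N, is_period eta p &
      forall q : nat, (0 < q)%N -> is_period eta q -> (p <= q)%N].

(* A probability measure on {0,1}^Z is represented by its values on the
   cylinder sets  { eta | eta_(n+j) = w_j for all j < size w }  (n : int,
   w : seq bool).  Cylinder sets form a pi-system generating the product
   sigma-algebra, so two measures are equal iff these functions are equal. *)
Definition cylmeasure (R : Type) := int -> seq bool -> R.

Definition in_cyl (eta : config) (m : int) (n : int) (w : seq bool) : bool :=
  [forall j : 'I_(size w), eta (m + n + (j : nat)%:Z) == nth false w j].

(* The measure giving mass 1/p to each of the p translates eta(. + m),
   0 <= m < p, of a configuration eta of period p. *)
Definition bpc_of (R : realFieldType) (eta : config) (p : nat) : cylmeasure R :=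
  fun n w => (#|[set m : 'I_p | in_cyl eta (m : nat)%:Z n w]|%:R) / p%:R.

Definition is_BPC (R : realFieldType) (nu : cylmeasure R) : Prop :=
  exists (eta : config) (p : nat), min_period eta p /\ nu = bpc_of R eta p.

Definition k_primitive (k : nat) (eta : config) (p : nat) : Prop :=
  forall i j : int,
    (forall l : nat, (l < k)%N -> eta (i + l%:Z) = eta (j + l%:Z)) ->
    (p%:Z %| j - i)%Z.

Definition is_kprim_BPC (R : realFieldType) (k : nat) (nu : cylmeasure R) : Prop :=
  exists (eta : config) (p : nat),
    [/\ min_period eta p, k_primitive k eta p & nu = bpc_of R eta p].

(* vertices: k.-tuple bool; edge a.theta -> theta.b *)
Definition dB_edge (k : nat) (u v : k.-tuple bool) : bool :=
  drop 1 (val u) == take k.-1 (val v).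

(* A cycle, given by the list of its vertices in order (nonempty, no repeated
   vertex, consecutive vertices -- cyclically -- joined by an edge).  Since
   there is at most one edge between two vertices, this determines the cycle.
   Cycles are considered up to rotation (see theorem3). *)
Definition dB_cycle (k : nat) (c : seq (k.-tuple bool)) : bool :=
  [&& c != [::], uniq c & cycle (@dB_edge k) c].

(* The periodic configuration associated with the cycle: record the first
   symbol of each edge, i.e. the first symbol of each source vertex. *)
Definition cycle_config (k : nat) (c : seq (k.-tuple bool)) : config :=
  fun i => nth false [seq nth false (val v) 0 | v <- c]
                     (absz (i %% (size c)%:Z)%Z).

Definition nu_C (R : realFieldType) (k : nat) (c : seq (k.-tuple bool)) : cylmeasure R :=
  bpc_of R (cycle_config c) (size c).

Definition Xk (k : nat) := (k.+1).-tuple bool.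

Definition pi_k (R : realFieldType) (k : nat) (nu : cylmeasure R) : {ffun Xk k -> R} :=
  [ffun x : Xk k => nu 0 (val x)].

(* local translation invariance: for A a subset of {0..k} and A' = A + t also
   inside {0..k}, the marginal on A' is the translate of the marginal on A. *)
Definition LTI (R : realFieldType) (k : nat) (mu : {ffun Xk k -> R}) : Prop :=
  forall (A : {set 'I_k.+1}) (t : nat) (y : nat -> bool),
    (forall i : 'I_k.+1, i \in A -> (i + t <= k)%N) ->
    \sum_(x : Xk k | [forall i in A, tnth x i == y i]) mu x =
    \sum_(x : Xk k | [forall i in A, nth false (val x) (i + t) == y i]) mu x.

Definition in_Mk (R : realFieldType) (k : nat) (mu : {ffun Xk k -> R}) : Prop :=
  [/\ forall x, 0 <= mu x, \sum_x mu x = 1 & LTI mu].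

Definition extreme_Mk (R : realFieldType) (k : nat) (mu : {ffun Xk k -> R}) : Prop :=
  in_Mk mu /\
  forall (a b : {ffun Xk k -> R}) (t : R),
    in_Mk a -> in_Mk b -> 0 < t < 1 ->
    (forall x, mu x = t * a x + (1 - t) * b x) -> a = b.

Definition comb_nuC (R : realFieldType) (k : nat)
    (s : seq (R * seq (k.-tuple bool))) : cylmeasure R :=
  fun n w => \sum_(cw <- s) cw.1 * nu_C R cw.2 n w.

(* Main.v *)
Require Import Defs.
From HB Require Import structures.
From mathcomp Require Import all_boot all_order all_algebra zify ring lra.
From Stdlib Require Import FunctionalExtensionality.
Import Order.TTheory GRing.Theory Num.Theory.
Local Open Scope ring_scope.
Set Implicit Arguments. Unset Strict Implicit. Unset Printing Implicit Defensive.

Lemma nth_rot_mod (T : Type) (x0 : T) (s : seq T) n j :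
  (n <= size s)%N -> (j < size s)%N ->
  nth x0 (rot n s) j = nth x0 s ((n + j) %% size s).
Proof.
move=> hn hj; rewrite /rot nth_cat size_drop.
case: ltnP => h.
- by rewrite nth_drop modn_small //; lia.
- rewrite nth_take; last lia.
  have -> : (n + j = size s + (j - (size s - n)))%N by lia.
  by rewrite modnDl modn_small; [congr nth; lia | lia].
Qed.

Lemma cycle_nthP (T : Type) (x0 : T) (e : rel T) (c : seq T) :
  cycle e c <-> (forall j, (j < size c)%N -> e (nth x0 c j) (nth x0 c (j.+1 %% size c))).
Proof.
case: c => [|x p] //=.
have Hn : forall j, (j < (size p).+1)%N ->
   nth x0 (x :: rcons p x) j = nth x0 (x :: p) j /\
   nth x0 (rcons p x) j = nth x0 (x :: p) (j.+1 %% (size p).+1).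
  move=> j hj; rewrite -rcons_cons !nth_rcons /= hj.
  case: ltnP => hjp.
    by rewrite modn_small.
  have -> : j = size p by lia.
  by rewrite eqxx modnn.
split.
- move/(pathP x0) => H j hj; have := H j; rewrite size_rcons => /(_ hj).
  by case: (Hn j hj) => -> ->.
- move=> H; apply/(pathP x0) => j; rewrite size_rcons => hj.
  by case: (Hn j hj) => -> ->; apply: H.
Qed.

Lemma period_nat (eta : config) (p : nat) : is_period eta p ->
  forall (i : int) (n : nat), eta (i + n%:Z * p%:Z) = eta i.
Proof.
move=> hp i; elim=> [|n IH]; first by rewrite mul0r addr0.
by rewrite -[in RHS]IH -[in RHS]hp; congr eta; rewrite intS; ring.
Qed.

Lemma period_int (eta : config) (p : nat) : is_period eta p ->
  forall (i z : int), eta (i + z * p%:Z) = eta i.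
Proof.
move=> hp i z; case: (intP z) => [|n|n]; first by rewrite mul0r addr0.
- exact: period_nat.
- rewrite -(period_nat hp _ n.+1). congr eta; ring.
Qed.

Lemma period_mod (eta : config) (p : nat) : is_period eta p ->
  forall i : int, eta i = eta (i %% p%:Z)%Z.
Proof.
move=> hp i; rewrite {1}(divz_eq i p) addrC.
by rewrite period_int.
Qed.

Section Cyc.
Variables (k : nat) (c : seq (k.-tuple bool)).
Hypotheses (hk : (0 < k)%N) (hc : dB_cycle c).

Definition v0k : k.-tuple bool := nseq_tuple k false.
Local Notation p := (size c).
Local Notation eta := (cycle_config c).

Lemma p_gt0 : (0 < p)%N.
Proof. by case/and3P: hc; case: c. Qed.

Lemma c_uniq : uniq c. Proof. by case/and3P: hc. Qed.

Lemma cc_period : is_period eta p.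
Proof. by move=> i; rewrite /cycle_config modzDr. Qed.

Lemma eta_nat (n : nat) : eta n = nth false (val (nth v0k c (n %% p))) 0.
Proof.
rewrite /cycle_config modz_nat absz_nat (nth_map v0k) //.
by rewrite ltn_pmod // p_gt0.
Qed.

Lemma edge_nth j : (j < p)%N -> dB_edge (nth v0k c j) (nth v0k c (j.+1 %% p)).
Proof. by case/and3P: hc => _ _ /(cycle_nthP v0k); apply. Qed.

Lemma window_nat (l n : nat) : (l < k)%N ->
  eta (n%:Z + l%:Z) = nth false (val (nth v0k c (n %% p))) l.
Proof.
elim: l n => [|l IH] n hl; first by rewrite addr0 eta_nat.
have -> : n%:Z + l.+1%:Z = n.+1%:Z + l%:Z by rewrite !intS; ring.
rewrite IH; last by lia.
have := edge_nth (ltn_pmod n p_gt0); rewrite /dB_edge => /eqP He.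
have E : ((n %% p).+1 %% p = n.+1 %% p)%N by rewrite -addn1 modnDml addn1.
rewrite E in He.
have hl' : (l < k.-1)%N by lia.
by rewrite -(nth_take _ hl') -He nth_drop add1n.
Qed.

Lemma modz_nat_abs (i : int) : (i %% p%:Z)%Z = (absz (i %% p%:Z)%Z)%:Z.
Proof. by rewrite gez0_abs // modz_ge0 // lt0n_neq0 ?p_gt0. Qed.

Lemma window_int (i : int) (l : nat) : (l < k)%N ->
  eta (i + l%:Z) = nth false (val (nth v0k c (absz (i %% p%:Z)%Z))) l.
Proof.
move=> hl.
rewrite {1}(divz_eq i p) -addrA addrC (period_int cc_period).
rewrite [in LHS]modz_nat_abs window_nat // modn_small //.
have : ((i %% p%:Z)%Z < p%:Z) by rewrite ltz_pmod // ltz_nat p_gt0.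
by rewrite modz_nat_abs ltz_nat.
Qed.

Lemma tuple_eq_nth (u v : k.-tuple bool) :
  (forall l, (l < k)%N -> nth false u l = nth false v l) -> u = v.
Proof.
move=> H; apply/val_inj/(eq_from_nth (x0:=false)); first by rewrite !size_tuple.
by move=> l; rewrite size_tuple; apply: H.
Qed.

Lemma absmod_lt (i : int) : (absz (i %% p%:Z)%Z < p)%N.
Proof.
have : ((i %% p%:Z)%Z < p%:Z) by rewrite ltz_pmod // ltz_nat p_gt0.
by rewrite modz_nat_abs ltz_nat.
Qed.

Lemma window_inj (i j : int) :
  (forall l, (l < k)%N -> eta (i + l%:Z) = eta (j + l%:Z)) ->
  absz (i %% p%:Z)%Z = absz (j %% p%:Z)%Z.
Proof.
move=> H; apply/eqP; rewrite -(nth_uniq v0k (absmod_lt i) (absmod_lt j) c_uniq).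
apply/eqP/tuple_eq_nth => l hl; rewrite -!window_int //; exact: H.
Qed.

Lemma cc_kprim : k_primitive k eta p.
Proof.
move=> i j H; have E := window_inj H.
rewrite -eqz_mod_dvd; apply/eqP.
by rewrite modz_nat_abs [RHS]modz_nat_abs E.
Qed.

Lemma cc_minper : min_period eta p.
Proof.
split; [exact: p_gt0 | exact: cc_period |].
move=> q q0 hq; rewrite leqNgt; apply/negP => hqp.
have : absz ((q%:Z) %% p%:Z)%Z = absz ((0%:Z) %% p%:Z)%Z.
  apply: window_inj => l hl; by rewrite add0r addrC hq.
rewrite !modz_nat !absz_nat modn_small // mod0n; lia.
Qed.
End Cyc.

Definition wseq (eta : config) (i : int) (n : nat) : seq bool :=
  [seq eta (i + j%:Z) | j <- iota 0 n].
Lemma size_wseq eta i n : size (wseq eta i n) = n.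
Proof. by rewrite size_map size_iota. Qed.
Lemma nth_wseq eta i n l : (l < n)%N -> nth false (wseq eta i n) l = eta (i + l%:Z).
Proof. by move=> h; rewrite (nth_map 0%N) ?size_iota // nth_iota. Qed.
Definition wt (eta : config) (k : nat) (i : int) : Xk k :=
  @Tuple k.+1 bool (wseq eta i k.+1) (introT eqP (size_wseq eta i k.+1)).

Lemma in_cyl_wseq eta m n w : in_cyl eta m n w = (wseq eta (m + n) (size w) == w).
Proof.
apply/forallP/eqP => [H|<- j].
- apply: (eq_from_nth (x0:=false)); rewrite size_wseq // => l hl.
  by rewrite nth_wseq //; apply/eqP/(H (Ordinal hl)).
- by have := ltn_ord j; rewrite {2}size_wseq => hj; rewrite nth_wseq.
Qed.

Lemma in_cyl_wt eta k m (x : Xk k) : in_cyl eta m 0 (val x) = (wt eta k m == x).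
Proof. by rewrite in_cyl_wseq addr0 size_tuple. Qed.

Lemma card_sum (p : nat) (P : pred 'I_p) : #|[set m | P m]| = (\sum_(m < p) P m)%N.
Proof. by rewrite -sum1dep_card big_mkcond. Qed.

Lemma sum_shift (g : nat -> nat) (p s : nat) : (forall m, g (m + p)%N = g m) ->
  (\sum_(m < p) g (m + s)%N = \sum_(m < p) g m)%N.
Proof.
move=> hg; elim: s => [|s IH]; first by apply: eq_bigr => m _; rewrite addn0.
rewrite -IH; case: p hg {IH} => [|p] hg; first by rewrite !big_ord0.
rewrite big_ord_recr big_ord_recl /= addnC; congr (_ + _)%N.
  by rewrite -(hg (0 + s)%N); congr g; lia.
by apply: eq_bigr => i _; rewrite /bump /= add1n addnS addSn.
Qed.

Section Bpc.
Variable R : realFieldType.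

Lemma bpc_card eta p n w :
  bpc_of R eta p n w = (\sum_(m < p) in_cyl eta m n w : nat)%:R / p%:R.
Proof. by rewrite /bpc_of card_sum. Qed.

Lemma bpc_shift eta p s : is_period eta p ->
  bpc_of R (fun z => eta (z + s%:Z)) p = bpc_of R eta p.
Proof.
move=> hp; apply: functional_extensionality => n.
apply: functional_extensionality => w.
rewrite !bpc_card; congr (_%:R / _).
rewrite -(@sum_shift (fun m : nat => nat_of_bool (in_cyl eta m%:Z n w)) p s).
  apply: eq_bigr => m _; congr nat_of_bool; apply: eq_forallb => j.
  by rewrite PoszD; congr (eta _ == _); ring.
move=> m; congr nat_of_bool; apply: eq_forallb => j.
by rewrite PoszD -[in RHS]hp; congr (eta _ == _); ring.
Qed.

Lemma pik_bpc_sum eta p k (Q : pred (Xk k)) :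
  \sum_(x | Q x) pi_k k (bpc_of R eta p) x = (\sum_(m < p) Q (wt eta k m) : nat)%:R / p%:R.
Proof.
under eq_bigr => x _ do rewrite ffunE bpc_card.
rewrite -mulr_suml; congr (_ * _).
rewrite -natr_sum; congr _%:R.
under eq_bigr => x _ do under eq_bigr => m _ do rewrite in_cyl_wt.
rewrite exchange_big /=; apply: eq_bigr => m _.
case: (boolP (Q (wt eta k m))) => hQ.
- rewrite (bigD1 (wt eta k m)) //= eqxx big1 // => x /andP[_ hx].
  by rewrite eq_sym (negbTE hx).
- by rewrite big1 // => x hx; case: eqP => // E; rewrite E hx in hQ.
Qed.

Lemma bpc_inMk eta p k : (0 < p)%N -> is_period eta p ->
  in_Mk (pi_k k (bpc_of R eta p)).
Proof.
move=> p0 hp; split.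
- by move=> x; rewrite ffunE /bpc_of divr_ge0 // ler0n.
- have := pik_bpc_sum eta p (fun _ : Xk k => true) => /= ->.
  rewrite big_const_ord iter_addn_0 mul1n divff //.
  by rewrite pnatr_eq0 -lt0n.
- move=> A t y hA; rewrite !pik_bpc_sum; congr (_%:R / _).
  pose g := fun m : nat =>
     nat_of_bool [forall (i | i \in A), eta (m%:Z + (i : nat)%:Z) == y i].
  have hg : forall m, g (m + p)%N = g m.
    move=> m; rewrite /g; congr nat_of_bool; apply: eq_forallb => i.
    by rewrite PoszD -addrA [(p%:Z + _)]addrC addrA hp.
  transitivity (\sum_(m < p) g m)%N.
    apply: eq_bigr => m _; rewrite /g; congr nat_of_bool; apply: eq_forallb_in => i hi.
    by rewrite (tnth_nth false) nth_wseq.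
  rewrite -(sum_shift t hg).
  apply: eq_bigr => m _; rewrite /g; congr nat_of_bool; apply: eq_forallb_in => i hi.
  rewrite nth_wseq; last by have := hA i hi; lia.
  by rewrite !PoszD; congr (eta _ == _); ring.
Qed.
End Bpc.

Definition wtn (eta : config) (n : nat) (i : int) : n.-tuple bool :=
  @Tuple n bool (wseq eta i n) (introT eqP (size_wseq eta i n)).

Lemma modz_abs_gen (p : nat) (i : int) : (0 < p)%N -> (i %% p%:Z)%Z = (absz (i %% p%:Z)%Z)%:Z.
Proof. by move=> p0; rewrite gez0_abs // modz_ge0 // lt0n_neq0. Qed.

Lemma absmod_lt_gen (p : nat) (i : int) : (0 < p)%N -> (absz (i %% p%:Z)%Z < p)%N.
Proof.
move=> p0; have : ((i %% p%:Z)%Z < p%:Z) by rewrite ltz_pmod // ltz_nat.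
by rewrite modz_abs_gen // ltz_nat.
Qed.

Section FromEta.
Variables (eta : config) (p k : nat).
Hypotheses (hk : (0 < k)%N) (hmin : min_period eta p) (hkp : k_primitive k eta p).

Definition cseq := mkseq (fun i => wtn eta k i%:Z) p.

Lemma hp0 : (0 < p)%N. Proof. by case: hmin. Qed.
Lemma hper : is_period eta p. Proof. by case: hmin. Qed.

Lemma size_cseq : size cseq = p. Proof. by rewrite size_mkseq. Qed.

Lemma cseq_config : cycle_config cseq = eta.
Proof.
apply: functional_extensionality => z; rewrite /cycle_config size_cseq.
have hr := absmod_lt_gen z hp0.
rewrite (nth_map (v0k k)) ?size_cseq // nth_mkseq //= nth_wseq // addr0.
by rewrite -modz_abs_gen ?hp0 // -period_mod //; exact: hper.
Qed.

Lemma cseq_cycle : dB_cycle cseq.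
Proof.
apply/and3P; split.
- by rewrite -size_eq0 size_cseq -lt0n hp0.
- apply/mkseq_uniqP => i j hi hj /(congr1 val) /= E.
  have : (p%:Z %| j%:Z - i%:Z)%Z.
    apply: hkp => l hl.
    by rewrite -(nth_wseq eta i%:Z hl) E nth_wseq.
  rewrite -eqz_mod_dvd !modz_nat eqz_nat !modn_small //.
  by move/eqP.
- apply/(cycle_nthP (v0k k)) => j; rewrite size_cseq => hj.
  rewrite !nth_mkseq ?ltn_pmod ?hp0 //.
  rewrite /dB_edge /=; apply/eqP/(eq_from_nth (x0:=false)).
    by rewrite size_drop size_takel !size_wseq //; lia.
  move=> l; rewrite size_drop size_wseq => hl.
  rewrite nth_drop nth_take; last by lia.
  rewrite !nth_wseq; try lia.
  rewrite (period_mod hper) [in RHS](period_mod hper) -!PoszD !modz_nat.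
  by congr (eta (Posz _)); rewrite modnDml; congr (_ %% _)%N; lia.
Qed.

End FromEta.

Lemma cc_rot (k : nat) (c : seq (k.-tuple bool)) (i : nat) :
  (0 < size c)%N -> (i <= size c)%N ->
  cycle_config (rot i c) = fun z => cycle_config c (z + i%:Z).
Proof.
move=> p0 hi; apply: functional_extensionality => z.
rewrite /cycle_config size_rot map_rot.
rewrite nth_rot_mod ?size_map ?absmod_lt_gen //.
rewrite -modzDml (modz_abs_gen z p0) -PoszD modz_nat absz_nat addnC.
by rewrite (modz_abs_gen z p0).
Qed.

Lemma nuC_rot (R : realFieldType) (k : nat) (c : seq (k.-tuple bool)) (i : nat) :
  (0 < size c)%N -> nu_C R (rot i c) = nu_C R c.
Proof.
move=> p0; case: (leqP i (size c)) => hi; last by rewrite rot_oversize // ltnW.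
rewrite /nu_C cc_rot // size_rot bpc_shift //.
by move=> z; rewrite /cycle_config modzDr.
Qed.

Lemma sum_nz_ex (p : nat) (P : pred 'I_p) :
  (\sum_(m < p) nat_of_bool (P m) != 0)%N -> exists m, P m.
Proof.
case: (pickP P) => [m Pm|H]; first by exists m.
by rewrite big1 ?eqxx // => m _; rewrite H.
Qed.

Lemma nuC_match (R : realFieldType) (k : nat) (c c' : seq (k.-tuple bool)) :
  (0 < k)%N -> dB_cycle c -> dB_cycle c' -> nu_C R c = nu_C R c' ->
  exists2 m, (m < size c)%N & forall j, (j < size c')%N ->
     nth (v0k k) c' j = nth (v0k k) c ((m + j) %% size c).
Proof.
move=> hk hc hc' Heq.
have p'0 := p_gt0 hc'; have p0 := p_gt0 hc.
pose w := wseq (cycle_config c') 0 (size c' + k).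
have E := congr1 (fun nu => nu 0 w) Heq; rewrite /= /nu_C !bpc_card in E.
have pos : (\sum_(m < size c') nat_of_bool (in_cyl (cycle_config c') m 0 w) != 0)%N.
  by rewrite (bigD1 (Ordinal p'0)) //= in_cyl_wseq /w size_wseq !addr0 eqxx.
have : (\sum_(m < size c) nat_of_bool (in_cyl (cycle_config c) m 0 w) != 0)%N.
  apply: contra pos => /eqP H; move: E; rewrite H mul0r => /esym /eqP.
  by rewrite mulf_eq0 invr_eq0 !pnatr_eq0 (negbTE (lt0n_neq0 p'0)) orbF.
case/sum_nz_ex => m; rewrite in_cyl_wseq addr0 => /eqP Hw.
exists m => // j hj; apply: tuple_eq_nth => l hl.
rewrite -(modn_small hj) -window_nat // -(nth_wseq (cycle_config c') 0 (n:=size c' + k)); last lia.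
rewrite -/w -Hw nth_wseq; last by rewrite /w size_wseq; lia.
rewrite (modn_small hj) -(window_nat hk hc (m+j)%N hl); congr cycle_config; rewrite !PoszD; ring.
Qed.

Lemma nuC_rot_iff (R : realFieldType) (k : nat) (c c' : seq (k.-tuple bool)) :
  (0 < k)%N -> dB_cycle c -> dB_cycle c' ->
  (nu_C R c = nu_C R c' <-> exists i : nat, c' = rot i c).
Proof.
move=> hk hc hc'; split; last by case=> i ->; rewrite nuC_rot // p_gt0.
move=> Heq.
have [m hm Hm] := nuC_match hk hc hc' Heq.
have [m' hm' Hm'] := nuC_match hk hc' hc (esym Heq).
have le1 : (size c' <= size c)%N.
  apply: uniq_leq_size (c_uniq hc') _ => x /(nthP (v0k k)) [j hj <-].
  by rewrite Hm // mem_nth // ltn_pmod // p_gt0.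
have le2 : (size c <= size c')%N.
  apply: uniq_leq_size (c_uniq hc) _ => x /(nthP (v0k k)) [j hj <-].
  by rewrite Hm' // mem_nth // ltn_pmod // p_gt0.
exists m; apply: (eq_from_nth (x0 := v0k k)); first by rewrite size_rot; lia.
move=> j hj; rewrite Hm // nth_rot_mod //; [exact: ltnW | lia].
Qed.

Lemma edge_eq (k : nat) (x y : Xk k) : (0 < k)%N ->
  take k x = take k y -> behead x = behead y -> x = y.
Proof.
move=> hk Ht Hb; apply/val_inj/(eq_from_nth (x0:=false)); first by rewrite !size_tuple.
rewrite size_tuple => -[|l] hl.
- by have := congr1 (fun s => nth false s 0) Ht; rewrite /= !nth_take.
- by have := congr1 (fun s => nth false s l) Hb; rewrite /= !nth_behead.
Qed.

Section CycEdges.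
Variables (k : nat) (c : seq (k.-tuple bool)).
Hypotheses (hk : (0 < k)%N) (hc : dB_cycle c).
Local Notation p := (size c).

Definition wtc (m : nat) : Xk k := wt (cycle_config c) k m%:Z.

Lemma take_wt m : take k (wtc m) = val (nth (v0k k) c (m %% p)).
Proof.
apply: (eq_from_nth (x0:=false)); first by rewrite size_take size_tuple ltnSn size_tuple.
move=> l; rewrite size_take size_tuple ltnSn => hl.
by rewrite nth_take ?nth_wseq //; [exact: window_nat | lia].
Qed.

Lemma behead_wt m : behead (wtc m) = val (nth (v0k k) c (m.+1 %% p)).
Proof.
apply: (eq_from_nth (x0:=false)); first by rewrite size_behead !size_tuple.
move=> l; rewrite size_behead size_tuple /= => hl.
rewrite (nth_map 0%N) ?size_iota // nth_iota // -(window_nat hk hc m.+1 hl).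
by congr cycle_config; rewrite !PoszD; ring.
Qed.

Lemma wt_inj m1 m2 : (m1 < p)%N -> (m2 < p)%N -> wtc m1 = wtc m2 -> m1 = m2.
Proof.
move=> h1 h2 /(congr1 (fun x : Xk k => take k x)); rewrite !take_wt !modn_small //.
move=> /val_inj /eqP; rewrite nth_uniq //; [by move/eqP | exact: c_uniq].
Qed.

Definition isE (x : Xk k) := [exists m : 'I_p, wtc m == x].

Lemma pik_cycle (R : realFieldType) x :
  pi_k k (nu_C R c) x = (isE x)%:R / p%:R.
Proof.
rewrite ffunE /nu_C bpc_card; congr (_%:R / _).
under eq_bigr => m _ do rewrite in_cyl_wt.
case: (boolP (isE x)) => [/existsP [m0 /eqP H0] | H].
- rewrite (bigD1 m0) //=.
  have E0 : (wt (cycle_config c) k m0 == x) by apply/eqP.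
  rewrite E0 big1 // => m /negbTE hm; case: eqP => // E.
  have : val m = val m0.
    apply: (wt_inj (ltn_ord m) (ltn_ord m0)).
    by transitivity x; [exact: E | exact: (esym H0)].
  by move/val_inj => E'; rewrite E' eqxx in hm.
- rewrite big1 // => m _; case: eqP => // E.
  by case/negP: H; apply/existsP; exists m; rewrite /wtc E.
Qed.
End CycEdges.

Section Flow.
Variables (R : realFieldType) (k : nat).

Definition outf (F : Xk k -> R) (v : seq bool) := \sum_(x : Xk k | take k x == v) F x.
Definition inf (F : Xk k -> R) (v : seq bool) := \sum_(x : Xk k | behead x == v) F x.
Definition conserv (F : Xk k -> R) := forall v, size v = k -> outf F v = inf F v.

Lemma LTI_cons (mu : {ffun Xk k -> R}) : LTI mu -> conserv mu.
Proof.
move=> H v hv; rewrite /outf /inf.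
pose A := [set i : 'I_k.+1 | (i < k)%N].
transitivity (\sum_(x : Xk k | [forall i in A, tnth x i == nth false v i]) mu x).
  apply: eq_bigl => x /=; apply/eqP/forall_inP => [<- i|Hx].
  - by rewrite inE => hi; rewrite (tnth_nth false) nth_take.
  - apply: (eq_from_nth (x0:=false)); first by rewrite size_takel ?size_tuple.
    move=> l; rewrite size_takel ?size_tuple // => hl.
    rewrite nth_take //; have hl' : (l < k.+1)%N by lia.
    have hA : Ordinal hl' \in A by rewrite inE.
    by have /eqP := Hx _ hA; rewrite (tnth_nth false).
rewrite (H A 1%N (fun i => nth false v i)); last by move=> i; rewrite inE; lia.
apply: eq_bigl => x /=; apply/forall_inP/eqP => [Hx|<- i].
- apply: (eq_from_nth (x0:=false)); first by rewrite size_behead size_tuple.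
  move=> l; rewrite size_behead size_tuple /= => hl.
  have hl' : (l < k.+1)%N by lia.
  have hA : Ordinal hl' \in A by rewrite inE.
  by rewrite nth_behead; have /eqP := Hx _ hA; rewrite addn1.
- by rewrite inE => hi; rewrite nth_behead addn1.
Qed.
End Flow.

Lemma drop1_take (s : seq bool) (k : nat) : drop 1 (take k s) = take k.-1 (behead s).
Proof. by case: s => [|a s]; case: k => [|k] //=; rewrite ?drop0 ?take0. Qed.

Lemma find_cycle (R : realFieldType) (k : nat) (F : Xk k -> R) :
  (0 < k)%N -> (forall x, 0 <= F x) -> conserv F -> (exists x, F x != 0) ->
  exists c : seq (k.-tuple bool), dB_cycle c /\ (forall x, isE c x -> 0 < F x).
Proof.
move=> hk F0 hF [x0 hx0].
have Fx0 : 0 < F x0 by rewrite lt_def hx0 F0.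
pose Pos (v : k.-tuple bool) := 0 < inf F (val v).
have posb : forall x : Xk k, 0 < F x -> Pos (behead_tuple x).
  move=> x px; rewrite /Pos /inf (bigD1 x) //=.
  by apply: ltr_wpDr => //; apply: sumr_ge0.
pose f (v : k.-tuple bool) : k.-tuple bool :=
  if [pick x : Xk k | (take k (val x) == val v) && (0 < F x)] is Some x
  then behead_tuple x else v.
have fP : forall v, Pos v -> Pos (f v) /\
    exists x : Xk k, [/\ take k x = val v, val (f v) = behead x & 0 < F x].
  move=> v hv; rewrite /f; case: pickP => [x /andP[/eqP hx px] | H].
    by split; [exact: posb | exists x].
  exfalso; have : outf F (val v) = 0.
    apply: big1 => x /eqP hx; have := H x; rewrite hx eqxx /= => /negbT.
    by rewrite -leNgt => hle; apply/eqP; rewrite eq_le hle F0.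
  by rewrite hF ?size_tuple // => E; move: hv; rewrite /Pos E ltxx.
have iterP : forall n v, Pos v -> Pos (iter n f v).
  by elim=> [//|n IH] v hv /=; case: (fP _ (IH v hv)).
pose y0 : k.-tuple bool := behead_tuple x0.
have Py0 : Pos y0 by exact: posb.
have : ~~ uniq (traject f y0 #|{: k.-tuple bool}|.+1).
  apply/negP => /card_uniqP; rewrite size_traject => E.
  by have := max_card (mem (traject f y0 #|{: k.-tuple bool}|.+1)); rewrite E ltnn.
case/(uniqPn y0) => i [j [ij]]; rewrite size_traject => jn.
rewrite !nth_traject //; last by lia.
move=> Eij; set y := iter i f y0.
have Py : Pos y by exact: iterP.
have cy : exists kk, iter kk.+1 f y = y.
  exists (j - i).-1; rewrite /y -iterD.
  have -> : ((j - i).-1.+1 + i = j)%N by lia.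
  by rewrite Eij.
have fc : fcycle f (orbit f y) by apply: (all_iffLR orbitPcycle 3 0).
have posc : forall z, z \in orbit f y -> Pos z.
  by move=> z; rewrite -fconnect_orbit => /iter_findex <-; exact: iterP.
have hcyc : dB_cycle (orbit f y).
  apply/and3P; split.
  - by apply/eqP => E; have := in_orbit f y; rewrite E.
  - exact: orbit_uniq.
  - apply: (@sub_in_cycle _ [pred z | z \in orbit f y] (frel f) (@dB_edge k) _ _ _ fc).
      move=> u w hu _ /eqP <-; have [_ [x [hx hfx _]]] := fP u (posc u hu).
      by rewrite /dB_edge hfx -hx drop1_take.
    by apply/allP.
exists (orbit f y); split => //.
move=> x /existsP [m /eqP <-].
set c := orbit f y.
have hm := ltn_ord m.
set z := nth (v0k k) c m.
have hz : z \in c by exact: mem_nth.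
have [_ [x' [hx' hfx' px']]] := fP z (posc z hz).
have Ef : f z = nth (v0k k) c (m.+1 %% size c).
  by have /eqP := (cycle_nthP (v0k k) (frel f) c).1 fc m hm.
suff -> : wtc c m = x' by [].
apply: edge_eq => //.
- by rewrite take_wt // modn_small // hx'.
- by rewrite behead_wt // -Ef hfx'.
Qed.

Lemma exists_min (R : realFieldType) (I : finType) (i0 : I) (G : I -> R) :
  exists j, forall i, G j <= G i.
Proof.
case: (@arg_minP _ R I i0 xpredT G isT) => j _ H.
by exists j => i; apply: H.
Qed.

Lemma sum_single (R : realFieldType) (T : finType) (P : pred T) (G : T -> R) x0 :
  P x0 -> (forall x, P x -> x != x0 -> G x = 0) -> \sum_(x | P x) G x = G x0.
Proof.
move=> P0 H; rewrite (bigD1 x0) //= big1 ?addr0 // => x /andP[]; exact: H.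
Qed.

Lemma LTI_lin (R : realFieldType) k (mu nu g : {ffun Xk k -> R}) (al be : R) :
  LTI mu -> LTI nu -> (forall x, g x = al * mu x + be * nu x) -> LTI g.
Proof.
move=> H1 H2 Hg A t y hA.
under eq_bigr => x _ do rewrite Hg.
rewrite big_split /= -!mulr_sumr (H1 A t y hA) (H2 A t y hA).
under [RHS]eq_bigr => x _ do rewrite Hg.
by rewrite big_split /= -!mulr_sumr.
Qed.

Lemma cycle_inMk (R : realFieldType) k (c : seq (k.-tuple bool)) :
  dB_cycle c -> in_Mk (pi_k k (nu_C R c)).
Proof.
move=> hc; apply: bpc_inMk; first exact: p_gt0.
by move=> z; rewrite /cycle_config modzDr.
Qed.

Lemma peel (R : realFieldType) k (F : Xk k -> R) :
  (0 < k)%N -> (forall x, 0 <= F x) -> conserv F -> (exists x, F x != 0) ->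
  exists c : seq (k.-tuple bool), exists w : R,
  [/\ dB_cycle c, 0 < w,
      forall x, 0 <= F x - w * pi_k k (nu_C R c) x,
      conserv (fun x => F x - w * pi_k k (nu_C R c) x) &
      (#|[set x | (F x - w * pi_k k (nu_C R c) x != 0)%R]| < #|[set x | (F x != 0)%R]|)%N].
Proof.
move=> hk F0 hF hx.
have [c [hc hpos]] := find_cycle hk F0 hF hx.
have p0 := p_gt0 hc.
have [j hj] := exists_min (Ordinal p0) (fun m : 'I_(size c) => F (wtc c m)).
have Ej : isE c (wtc c j) by apply/existsP; exists j.
have al0 : 0 < F (wtc c j) by exact: hpos.
exists c, (F (wtc c j) * (size c)%:R).
have pn0 : (size c)%:R != 0 :> R by rewrite pnatr_eq0 -lt0n.
have Hnu : forall x, F (wtc c j) * (size c)%:R * pi_k k (nu_C R c) x =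
                     F (wtc c j) * (isE c x)%:R.
  by move=> x; rewrite pik_cycle //; field.
split => //.
- by rewrite mulr_gt0 // ltr0n.
- move=> x; rewrite Hnu subr_ge0; case: (boolP (isE c x)) => [/existsP [m /eqP <-]|_].
    by rewrite mulr1 hj.
  by rewrite mulr0.
- move=> v hv; rewrite /outf /inf !sumrB -!mulr_sumr.
  have [_ _ HL] := cycle_inMk R hc.
  have := LTI_cons HL hv; rewrite /outf /inf => ->.
  by have := hF v hv; rewrite /outf /inf => ->.
- apply: proper_card; apply/properP; split.
    apply/subsetP => x; rewrite !inE; apply: contra => /eqP Fx.
    rewrite Hnu; case: (boolP (isE c x)) => hE; last by rewrite Fx mulr0 subr0.
    by have := hpos x hE; rewrite Fx ltxx.
  exists (wtc c j); first by rewrite inE lt0r_neq0.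
  by rewrite inE Hnu Ej mulr1 subrr eqxx.
Qed.

Lemma decomp (R : realFieldType) k (hk : (0 < k)%N) (n : nat) :
  forall F : Xk k -> R, (forall x, 0 <= F x) -> conserv F ->
  (#|[set x | (F x != 0)%R]| <= n)%N ->
  exists s : seq (R * seq (k.-tuple bool)),
    [/\ all (fun cw => dB_cycle cw.2) s, all (fun cw => 0 <= cw.1) s &
        forall x, F x = \sum_(cw <- s) cw.1 * pi_k k (nu_C R cw.2) x].
Proof.
elim: n => [|n IH] F F0 hF hn.
  exists [::]; split => // x; rewrite big_nil.
  move: hn; rewrite leqn0 cards_eq0 => /eqP S0.
  have : x \notin [set x | (F x != 0)%R] by rewrite S0 inE.
  by rewrite inE negbK => /eqP.
case: (pickP (fun x => F x != 0)) => [x0 hx0|H0]; last first.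
  exists [::]; split => // x; rewrite big_nil.
  by have := H0 x => /negbFE /eqP.
have [c [w [hc w0 G0 hG hcard]]] := peel hk F0 hF (ex_intro _ x0 hx0).
have [s' [h1 h2 h3]] := IH _ G0 hG (ltnSE (leq_trans hcard hn)).
exists ((w, c) :: s'); split.
- by rewrite /= hc.
- by rewrite /= ltW.
- move=> x; rewrite big_cons /= -h3; ring.
Qed.

Lemma nth_idx_eq k (c : seq (k.-tuple bool)) i j : dB_cycle c ->
  (i < size c)%N -> (j < size c)%N -> val (nth (v0k k) c i) = val (nth (v0k k) c j) -> i = j.
Proof.
move=> hc hi hj /val_inj /eqP; rewrite nth_uniq //; [by move/eqP | exact: c_uniq].
Qed.

Lemma cycle_const (R : realFieldType) k (c : seq (k.-tuple bool)) (a : {ffun Xk k -> R}) :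
  (0 < k)%N -> dB_cycle c -> LTI a -> (forall x, ~~ isE c x -> a x = 0) ->
  forall x, a x = (isE c x)%:R * a (wtc c 0).
Proof.
move=> hk hc aL a0.
have hcons := LTI_cons aL.
have step : forall m, (m.+1 < size c)%N -> a (wtc c m.+1) = a (wtc c m).
  move=> m hm; set v := val (nth (v0k k) c m.+1).
  have := hcons v (size_tuple _); rewrite /outf /inf.
  rewrite (sum_single (x0:=wtc c m.+1)); first last.
  - move=> x /eqP hx hne; case: (boolP (isE c x)) => [/existsP [m' /eqP Ex]|]; last exact: a0.
    move: hne; rewrite -Ex; case/negP; apply/eqP; congr wtc.
    move: hx; rewrite -Ex take_wt // modn_small // => /(nth_idx_eq hc) -> //.
  - by rewrite take_wt // modn_small.
  rewrite (sum_single (x0:=wtc c m)); first last.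
  - move=> x /eqP hx hne; case: (boolP (isE c x)) => [/existsP [m' /eqP Ex]|]; last exact: a0.
    move: hne; rewrite -Ex; case/negP; apply/eqP; congr wtc.
    move: hx; rewrite -Ex behead_wt // => /(nth_idx_eq hc) E.
    have hm' := ltn_ord m'.
    case: (ltnP m'.+1 (size c)) => h.
      by move: E; rewrite modn_small // => /(_ h hm) [].
    have e : m'.+1 = size c by lia.
    by move: E; rewrite e modnn => /(_ (p_gt0 hc) hm).
  - by rewrite behead_wt // modn_small.
  by [].
have allc : forall m, (m < size c)%N -> a (wtc c m) = a (wtc c 0).
  elim=> [//|m IH] hm; rewrite step // IH //; lia.
move=> x; case: (boolP (isE c x)) => [/existsP [m /eqP <-] | hx].
  by rewrite mul1r allc.
by rewrite mul0r a0.
Qed.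

Lemma cycle_extreme (R : realFieldType) k (c : seq (k.-tuple bool)) :
  (0 < k)%N -> dB_cycle c -> extreme_Mk (pi_k k (nu_C R c)).
Proof.
move=> hk hc; split; first exact: cycle_inMk.
move=> a b t [a0 a1 aL] [b0 b1 bL] /andP[t0 t1] Hmu.
have off : forall x, ~~ isE c x -> a x = 0 /\ b x = 0.
  move=> x hx; have := Hmu x; rewrite pik_cycle // (negbTE hx) mul0r => H.
  have := a0 x; have := b0 x => hb ha; split; nra.
have Ha := cycle_const hk hc aL (fun x hx => (off x hx).1).
have Hb := cycle_const hk hc bL (fun x hx => (off x hx).2).
set N := \sum_(x : Xk k) (isE c x)%:R : R.
have sa : a (wtc c 0) * N = 1.
  transitivity (\sum_(x : Xk k) a x); last exact: a1.
  by rewrite /N mulr_sumr; apply: eq_bigr => x _; rewrite [RHS]Ha mulrC.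
have sb : b (wtc c 0) * N = 1.
  transitivity (\sum_(x : Xk k) b x); last exact: b1.
  by rewrite /N mulr_sumr; apply: eq_bigr => x _; rewrite [RHS]Hb mulrC.
have N0 : N != 0 by apply/eqP => N0; move: sa; rewrite N0 mulr0 => /eqP; rewrite eq_sym oner_eq0.
have eab : a (wtc c 0) = b (wtc c 0).
  by apply: (mulIf N0); rewrite sa sb.
by apply/ffunP => x; rewrite Ha Hb eab.
Qed.

Unset Implicit Arguments.

Theorem theorem3 (R : realFieldType) (k : nat) (hk : (1 <= k)%N) :
  [/\ (forall c : seq (k.-tuple bool), dB_cycle c -> is_kprim_BPC k (nu_C R c)),
      (forall c c' : seq (k.-tuple bool), dB_cycle c -> dB_cycle c' ->
         (nu_C R c = nu_C R c' <-> exists i : nat, c' = rot i c)),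
      (forall nu : cylmeasure R, is_kprim_BPC k nu ->
         exists c : seq (k.-tuple bool), dB_cycle c /\ nu = nu_C R c),
      (forall mu : {ffun Xk k -> R},
         extreme_Mk mu <-> exists c : seq (k.-tuple bool), dB_cycle c /\ mu = @pi_k R k (nu_C R c))
  & (forall mu : {ffun Xk k -> R}, in_Mk mu ->
         exists s : seq (R * seq (k.-tuple bool)),
           [/\ all (fun cw => dB_cycle cw.2) s,
               all (fun cw => 0 <= cw.1) s,
               \sum_(cw <- s) cw.1 = 1
             & mu = @pi_k R k (comb_nuC s)])].
Proof.
split.
- move=> c hc; exists (cycle_config c), (size c); split => //.
    exact: cc_minper.
  exact: cc_kprim.
- by move=> c c' hc hc'; apply: nuC_rot_iff.
- move=> nu [eta [p [hmin hkp ->]]]; exists (cseq eta p k); split.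
    exact: cseq_cycle.
  by rewrite /nu_C cseq_config // size_cseq.
- move=> mu; split; last by move=> [c [hc ->]]; exact: cycle_extreme.
  move=> [[m0 m1 mL] Hext].
  have hx : exists x, mu x != 0.
    case: (pickP (fun x => mu x != 0)) => [x hx|H]; first by exists x.
    rewrite big1 in m1; first by move/eqP: m1; rewrite eq_sym oner_eq0.
    by move=> x _; have := H x => /negbFE/eqP.
  have [c [w [hc w0 G0 hG _]]] := peel hk m0 (LTI_cons mL) hx.
  exists c; split => //.
  set nu := pi_k k (nu_C R c).
  have [n0 n1 nL] := cycle_inMk R hc.
  have sG : \sum_x (mu x - w * nu x) = 1 - w.
    by rewrite sumrB -mulr_sumr m1 n1 mulr1.
  have w1 : w <= 1 by rewrite -subr_ge0 -sG sumr_ge0.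
  case: (eqVneq w 1) => [w_1 | wn1].
    apply/ffunP => x.
    have S0 : \sum_x (mu x - w * nu x) = 0 by rewrite sG w_1 subrr.
    have := psumr_eq0P (fun x _ => G0 x) S0 (isT : xpredT x).
    by move=> /(_ x) /eqP; rewrite w_1 mul1r subr_eq0 => /eqP.
  have wl : w < 1 by rewrite lt_neqAle wn1 w1.
  have hw : 1 - w != 0 by rewrite subr_eq0 eq_sym.
  pose b := [ffun x => (mu x - w * nu x) / (1 - w)].
  have bM : in_Mk b.
    split.
    + by move=> x; rewrite ffunE divr_ge0 // subr_ge0 ltW.
    + under eq_bigr => x _ do rewrite ffunE.
      by rewrite -mulr_suml sG divff.
    + apply: (LTI_lin (al := (1 - w)^-1) (be := - (w / (1 - w))) mL nL) => x.
      by rewrite ffunE; field.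
  have Enb : nu = b.
    apply: (Hext nu b w (cycle_inMk R hc) bM); first by rewrite w0 wl.
    move=> x; have -> : b x = (mu x - w * nu x) / (1 - w) by rewrite ffunE.
    by field.
  apply/ffunP => x.
  have -> : mu x = w * nu x + (1 - w) * b x.
    have -> : b x = (mu x - w * nu x) / (1 - w) by rewrite ffunE.
    by field.
  by rewrite -Enb; ring.
- move=> mu [m0 m1 mL].
  have [s [h1 h2 h3]] :=
    decomp hk (n := #|[set x | mu x != 0]|) m0 (LTI_cons mL) (leqnn _).
  exists s; split => //.
    rewrite -m1 (eq_bigr _ (fun x _ => h3 x)) exchange_big /=.
    rewrite big_seq_cond [RHS]big_seq_cond; apply: eq_bigr => cw /andP[hcw _].
    have hc := allP h1 cw hcw.
    have [_ n1 _] := cycle_inMk R hc.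
    by rewrite -mulr_sumr n1 mulr1.
  by apply/ffunP => x; rewrite h3 [RHS]ffunE /comb_nuC; apply: eq_bigr => cw _; rewrite ffunE.
Qed.
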